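(* The modified multiplicative price update algorithm is a truthful mechanism without money and with verification for CAs with unknown $k$-minded bidders and goods of supply $b$; it outputs an allocation in which each good is allocated at most $b$ times, and its approximation ratio is $O(b\, m^{1/b})$.
   Context: Multi-unit combinatorial auction: a set $\mathsf U$ of $m$ goods, each with supply $b\ge1$; $n$ bidders. True type of bidder $i$: $t_i=(v_i,\mathcal S_i)$ with $\mathcal S_i$ a private collection of $k$ nonempty subsets of $\mathsf U$ and $v_i:\mathcal S_i\to\mathbb R_{\ge0}$ private, extended by $v_i(T)=\max\{v_i(S'):S'\in\mathcal S_i,S'\subseteq T\}$ ($0$ if none). Declarations $(w,\mathcal W)$ have the same form. Modified multiplicative price update algorithm on declarations $(w_i,\mathcal W_i)$: let $v^i_{\max}=\max_{S\in\mathcal W_i}w_i(S)$; let $j$ be the bidder with largest $v^j_{\max}$ (smallest index on ties); set $\mu=(1+\epsilon)v^j_{\max}$ for a fixed $0<\epsilon\ll1$, $p_0=\mu/(4bm)$, $r=(4bm)^{1/b}$, and initial prices $p_e=p_0$; process bidders in the order $j,1,2,\dots,j-1,j+1,\dots,n$; when processing bidder $i$, let $S_i$ maximize $w_i(S)$ over $S\in\mathcal W_i$ with $w_i(S)\ge\sum_{e\in S}p_e$ (current prices; $S_i=\emptyset$ if none), allocate $S_i$ to $i$, and multiply $p_e$ by $r$ for every $e\in S_i$. Verification: bidder $i$ with true type $t_i$ facing $\mathbf b_{-i}$ may declare $b_i=(z,\mathcal T)$ only if $z(A_i(b_i,\mathbf b_{-i}))\le v_i(A_i(b_i,\mathbf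 b_{-i}))$. Truthful without money and with verification: for all $i$, $\mathbf b_{-i}$, true types $t_i$ and declarations $b_i$ permitted by verification, $v_i(A_i(t_i,\mathbf b_{-i}))\ge v_i(A_i(b_i,\mathbf b_{-i}))$. Approximation ratio $\alpha$: on every truthful input, the social welfare $\sum_i v_i(A_i)$ is at least $\mathrm{OPT}/\alpha$, where $\mathrm{OPT}$ is the maximum social welfare over allocations assigning each good at most $b$ times. *)

(* Defs.v *)
From mathcomp Require Import all_boot.
From Stdlib Require Import Reals.

Set Implicit Arguments. Unset Strict Implicit. Unset Printing Implicit Defensive.

Record btype (m : nat) := BType {
  bcoll : {set {set 'I_m}} ;
  bval  : {set 'I_m} -> R }.

Definition wf_type (m k : nat) (t : btype m) : Prop :=
  #|bcoll t| = k /\ set0 \notin bcoll t /\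
  (forall S, S \in bcoll t -> (0 <= bval t S)%R).

Definition vext m (t : btype m) (T : {set 'I_m}) : R :=
  foldr (fun (S : {set 'I_m}) acc => if S \subset T then Rmax (bval t S) acc else acc) 0%R
        (enum (bcoll t)).

Definition vmax m (t : btype m) : R :=
  foldr (fun (S : {set 'I_m}) acc => Rmax (bval t S) acc) 0%R (enum (bcoll t)).

Definition Rleb (x y : R) : bool := if Rle_dec x y then true else false.

(* first element of l maximising f (earliest one on ties) *)
Definition first_max (A : Type) (f : A -> R) (l : seq A) : option A :=
  foldl (fun acc x => match acc with
                      | None => Some x
                      | Some y => if Rlt_dec (f y) (f x) then Some x else Some y
                      end) None l.

Definition price_sum m (p : 'I_m -> R) (S : {set 'I_m}) : R :=
  foldr (fun e acc => (p e + acc)%R) 0%R (enum S).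

Definition top_bidder m n (bids : 'I_n -> btype m) : option 'I_n :=
  first_max (fun i => vmax (bids i)) (enum 'I_n).

Definition proc_order m n (bids : 'I_n -> btype m) : seq 'I_n :=
  match top_bidder bids with
  | None => [::]
  | Some j => j :: [seq i <- enum 'I_n | i != j]
  end.

Definition mu_of m n (eps : R) (bids : 'I_n -> btype m) : R :=
  match top_bidder bids with
  | None => 0%R
  | Some j => ((1 + eps) * vmax (bids j))%R
  end.

Definition choose_set m (t : btype m) (p : 'I_m -> R) : {set 'I_m} :=
  odflt set0 (first_max (bval t)
     [seq S <- enum (bcoll t) | Rleb (price_sum p S) (bval t S)]).

Definition mpu_step m n (bids : 'I_n -> btype m) (r : R)
    (st : ('I_m -> R) * ('I_n -> {set 'I_m})) (i : 'I_n)
    : ('I_m -> R) * ('I_n -> {set 'I_m}) :=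
  let S := choose_set (bids i) st.1 in
  ((fun e => if e \in S then (st.1 e * r)%R else st.1 e),
   (fun i' => if i' == i then S else st.2 i')).

Definition mpu_alloc (b : nat) (eps : R) m n (bids : 'I_n -> btype m)
    : 'I_n -> {set 'I_m} :=
  let mu := mu_of eps bids in
  let p0 := (mu / (4 * INR b * INR m))%R in
  let r := Rpower (4 * INR b * INR m) (/ INR b) in
  (foldl (mpu_step bids r) ((fun _ => p0), (fun _ => set0)) (proc_order bids)).2.

Definition feasible m n (b : nat) (X : 'I_n -> {set 'I_m}) : Prop :=
  forall e : 'I_m, (#|[set i | e \in X i]| <= b)%N.

Definition welfare m n (t : 'I_n -> btype m) (X : 'I_n -> {set 'I_m}) : R :=
  foldr (fun i acc => (vext (t i) (X i) + acc)%R) 0%R (enum 'I_n).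

Definition upd m n (bids : 'I_n -> btype m) (i : 'I_n) (d : btype m) :=
  fun i' => if i' == i then d else bids i'.

(* Main.v *)
From HB Require Import structures.
Require Import Defs.
From mathcomp Require Import all_boot.
From Stdlib Require Import Reals Lra.
Set Implicit Arguments. Unset Strict Implicit. Unset Printing Implicit Defensive.


Lemma RplusA : associative Rplus. Proof. move=> *; ring. Qed.
HB.instance Definition _ := Monoid.isComLaw.Build R 0%R Rplus RplusA Rplus_comm Rplus_0_l.

Lemma big_Rle (I : Type) (r : seq I) (P : pred I) (F G : I -> R) :
  (forall i, P i -> (F i <= G i)%R) ->
  (\big[Rplus/0%R]_(i <- r | P i) F i <= \big[Rplus/0%R]_(i <- r | P i) G i)%R.
Proof. move=> H; apply: (big_ind2 (fun x y => x <= y)%R) => //; [lra| move=> *; lra]. Qed.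

Lemma big_Rge0 (I : Type) (r : seq I) (P : pred I) (F : I -> R) :
  (forall i, P i -> (0 <= F i)%R) -> (0 <= \big[Rplus/0%R]_(i <- r | P i) F i)%R.
Proof. move=> H; apply: (big_ind (fun x => 0 <= x)%R) => //; [lra| move=> *; lra]. Qed.

Lemma big_Rdistr (I : Type) (r : seq I) (P : pred I) (F : I -> R) c :
  (\big[Rplus/0%R]_(i <- r | P i) (c * F i) = c * \big[Rplus/0%R]_(i <- r | P i) F i)%R.
Proof.
symmetry; apply: (big_morph (fun x => c * x)%R) => [x y|]; ring.
Qed.

Lemma iter_Rplus n c : iter n (Rplus c) 0%R = (INR n * c)%R.
Proof. elim: n => [|n IH]; first by rewrite /=; ring. rewrite S_INR; change (iter n.+1 (Rplus c) 0%R) with (c + iter n (Rplus c) 0)%R; rewrite IH; ring. Qed.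

Lemma big_Rconst n c : \big[Rplus/0%R]_(i < n) c = (INR n * c)%R.
Proof. by rewrite big_const_ord iter_Rplus. Qed.

Lemma foldr_big (I : Type) (s : seq I) (p : I -> R) :
  foldr (fun e acc => (p e + acc)%R) 0%R s = \big[Rplus/0%R]_(e <- s) p e.
Proof. elim: s => [|x s IH] /=; [by rewrite big_nil | by rewrite big_cons IH]. Qed.

Lemma price_sumE m (p : 'I_m -> R) S :
  price_sum p S = \big[Rplus/0%R]_(e < m) (if e \in S then p e else 0%R).
Proof. by rewrite /price_sum foldr_big big_enum -big_mkcond. Qed.

Lemma price_sum_ge0 m (p : 'I_m -> R) S : (forall e, 0 <= p e)%R -> (0 <= price_sum p S)%R.
Proof. move=> H; rewrite price_sumE; apply: big_Rge0 => e _; case: ifP => _ //; lra. Qed.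

Lemma price_sum_mono m (p q : 'I_m -> R) (S T : {set 'I_m}) : (forall e, 0 <= p e)%R ->
  (forall e, p e <= q e)%R -> S \subset T -> (price_sum p S <= price_sum q T)%R.
Proof.
move=> H0 H /subsetP sub; rewrite !price_sumE; apply: big_Rle => e _.
case: ifP => eS; first by rewrite (sub _ eS).
case: ifP => _; [have:= H0 e; have := H e; lra| lra].
Qed.

Lemma price_sum_const m c (S : {set 'I_m}) : (0 <= c)%R -> (price_sum (fun _ => c) S <= INR m * c)%R.
Proof.
move=> c0; rewrite price_sumE -big_Rconst; apply: big_Rle => e _; case: ifP => _; lra.
Qed.

Lemma price_sum0 m (p : 'I_m -> R) : price_sum p set0 = 0%R.
Proof. rewrite price_sumE; rewrite big1 // => e _; by rewrite in_set0. Qed.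

Section VV.
Variables (m : nat) (t : btype m).

Lemma vext_ge0 T : (0 <= vext t T)%R.
Proof.
rewrite /vext; elim: (enum _) => [|x s IH] /=; first lra.
case: ifP => _ //; eapply Rle_trans; [exact IH| apply Rmax_r].
Qed.

Lemma vext_ge S (T : {set 'I_m}) : S \in bcoll t -> S \subset T -> (bval t S <= vext t T)%R.
Proof.
rewrite /vext -mem_enum; elim: (enum _) => [|x s IH] //= ; rewrite in_cons => /orP [/eqP -> | Hs] sub.
  rewrite sub; apply Rmax_l.
case: ifP => _; last exact: IH.
eapply Rle_trans; [exact: IH| apply Rmax_r].
Qed.

Lemma vext_attain T : (vext t T <= 0)%R \/
  exists S, S \in bcoll t /\ S \subset T /\ vext t T = bval t S.
Proof.
rewrite /vext; have: forall S, S \in enum (bcoll t) -> S \in bcoll t by move=> S; rewrite mem_enum.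
elim: (enum _) => [|x s IH] /= Hm; first by left; lra.
have IH' := IH (fun S HS => Hm S (ltac:(by rewrite in_cons HS orbT))).
case: ifP => sub //.
set a := foldr _ _ _ in IH' *.
case: (Rle_dec a (bval t x)) => Ha.
  rewrite Rmax_left //; by right; exists x; split => //; apply: Hm; rewrite mem_head.
rewrite Rmax_right; [exact: IH'|lra].
Qed.

Lemma vext_le_vmax T : (vext t T <= vmax t)%R.
Proof.
rewrite /vext /vmax; elim: (enum _) => [|x s IH] /=; first lra.
case: ifP => _; first by apply: Rle_max_compat_l.
eapply Rle_trans; [exact IH| apply Rmax_r].
Qed.

Lemma vmax_ge0 : (0 <= vmax t)%R.
Proof.
rewrite /vmax; elim: (enum _) => [|x s IH] /=; first lra.
eapply Rle_trans; [exact IH| apply Rmax_r].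
Qed.

Lemma vmax_attain : (vmax t <= 0)%R \/ exists S, S \in bcoll t /\ vmax t = bval t S.
Proof.
rewrite /vmax; have: forall S, S \in enum (bcoll t) -> S \in bcoll t by move=> S; rewrite mem_enum.
elim: (enum _) => [|x s IH] /= Hm; first by left; lra.
have IH' := IH (fun S HS => Hm S (ltac:(by rewrite in_cons HS orbT))).
set a := foldr _ _ _ in IH' *.
case: (Rle_dec a (bval t x)) => Ha.
  rewrite Rmax_left //; by right; exists x; split => //; apply: Hm; rewrite mem_head.
rewrite Rmax_right; [exact: IH'|lra].
Qed.

Lemma vmax_ge S : S \in bcoll t -> (bval t S <= vmax t)%R.
Proof.
rewrite /vmax -mem_enum; elim: (enum _) => [|x s IH] //= ; rewrite in_cons => /orP [/eqP -> | Hs].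
  apply Rmax_l.
eapply Rle_trans; [exact: IH| apply Rmax_r].
Qed.
End VV.

Lemma first_max_rcons (A : Type) (f : A -> R) l z :
  first_max f (rcons l z) = match first_max f l with
    | None => Some z
    | Some y => if Rlt_dec (f y) (f z) then Some z else Some y end.
Proof. by rewrite /first_max foldl_rcons. Qed.

Lemma first_max_None (A : Type) (f : A -> R) l : first_max f l = None -> l = [::].
Proof.
elim/last_ind: l => [|l z _] // ; rewrite first_max_rcons.
by case: (first_max f l) => [y|] //; case: Rlt_dec.
Qed.

Lemma first_max_Some (A : Type) (f : A -> R) (l : seq A) : l <> [::] -> exists x, first_max f l = Some x.
Proof.
move=> H; case E: (first_max f l) => [y|]; first by exists y.
by have := first_max_None E.
Qed.

Lemma first_max_dec (A : eqType) (f : A -> R) l x : first_max f l = Some x ->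
  exists l1 l2, l = l1 ++ x :: l2 /\ (forall y, y \in l1 -> f y < f x)%R /\
     (forall y, y \in l2 -> f y <= f x)%R.
Proof.
elim/last_ind: l x => [|l z IH] x //; rewrite first_max_rcons.
case E: (first_max f l) => [y|].
  have [l1 [l2 [-> [H1 H2]]]] := IH _ E.
  case: Rlt_dec => Hlt [<-].
    exists (l1 ++ y :: l2), [::]; split; first by rewrite cats1.
    split=> // w; rewrite mem_cat in_cons => /orP [/H1|/orP [/eqP ->|/H2]]; lra.
  exists l1, (rcons l2 z); split; first by rewrite rcons_cat rcons_cons.
  split=> // w; rewrite mem_rcons in_cons => /orP [/eqP ->|/H2]; lra.
move=> [<-]; rewrite (first_max_None E); exists [::], [::]; split => //.
Qed.

Lemma first_max_mem (A : eqType) (f : A -> R) l x : first_max f l = Some x ->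
  x \in l /\ (forall y, y \in l -> f y <= f x)%R.
Proof.
move=> /first_max_dec [l1 [l2 [-> [H1 H2]]]]; split; first by rewrite mem_cat mem_head orbT.
move=> y; rewrite mem_cat in_cons => /orP [/H1|/orP [/eqP ->|/H2]]; lra.
Qed.

Lemma first_max_idx (A : eqType) (f : A -> R) l x : uniq l -> first_max f l = Some x ->
  forall y, y \in l -> (index y l < index x l)%N -> (f y < f x)%R.
Proof.
move=> U /first_max_dec [l1 [l2 [E [H1 H2]]]] y yl.
have xl1 : x \notin l1 by move: U; rewrite E cat_uniq /= => /and3P [_ /norP [] ].
subst l; rewrite [index x _]index_cat (negbTE xl1) /= eqxx addn0 index_cat; case: ifP => yl1; first by move=> _; apply: H1.
by rewrite ltnNge leq_addr.
Qed.

Lemma Rleb_true x y : Rleb x y = true <-> (x <= y)%R.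
Proof. rewrite /Rleb; case: Rle_dec => //. Qed.

Lemma choose_setP m (d : btype m) P :
  (choose_set d P = set0 /\ forall S, S \in bcoll d -> (bval d S < price_sum P S)%R) \/
  (choose_set d P \in bcoll d /\ (price_sum P (choose_set d P) <= bval d (choose_set d P))%R /\
   forall S, S \in bcoll d -> (price_sum P S <= bval d S)%R -> (bval d S <= bval d (choose_set d P))%R).
Proof.
rewrite /choose_set; set l := [seq S <- _ | _].
case E: (first_max _ l) => [S|] /=.
  have [Sl Hmax] := first_max_mem E.
  move: (Sl); rewrite mem_filter mem_enum => /andP [/Rleb_true Haff Sc].
  right; split => //; split => // S' S'c HS'; apply: Hmax.
  by rewrite mem_filter mem_enum S'c andbT; apply/Rleb_true.
left; split => // S Sc.
have := first_max_None E => Hl.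
case: (Rlt_dec (bval d S) (price_sum P S)) => // Hn.
have : S \in l by rewrite mem_filter mem_enum Sc andbT; apply/Rleb_true; lra.
by rewrite Hl.
Qed.

Section Run.
Variables (m n : nat) (bids : 'I_n -> btype m) (r : R).

Lemma run_notin s st x : x \notin s -> (foldl (mpu_step bids r) st s).2 x = st.2 x.
Proof.
elim: s st => [|y s IH] st //=; rewrite in_cons negb_or => /andP [xy xs].
by rewrite IH //= (negbTE xy).
Qed.

Lemma run_nonneg s st : (0 <= r)%R -> (forall e, 0 <= st.1 e)%R ->
  forall e, (0 <= (foldl (mpu_step bids r) st s).1 e)%R.
Proof.
move=> r0; elim: s st => [|y s IH] st H //=; apply: IH => e /=.
case: ifP => _; last exact: H.
have := H e; nra.
Qed.

Lemma run_mono s st : (1 <= r)%R -> (forall e, 0 <= st.1 e)%R ->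
  forall e, (st.1 e <= (foldl (mpu_step bids r) st s).1 e)%R.
Proof.
move=> r1; elim: s st => [|y s IH] st H e /=; first lra.
apply: Rle_trans (IH _ _ e).
  simpl; case: ifP => _; last lra. have := H e; nra.
move=> e' /=; case: ifP => _; last exact: H. have := H e'; nra.
Qed.

Lemma run_split s1 s2 i st : uniq (s1 ++ i :: s2) ->
  (foldl (mpu_step bids r) st (s1 ++ i :: s2)).2 i =
  choose_set (bids i) (foldl (mpu_step bids r) st s1).1.
Proof.
rewrite cat_uniq /= => /and4P [_ _ ni _].
by rewrite foldl_cat /= run_notin //= eqxx.
Qed.
End Run.

Lemma run_agree m n (bids bids' : 'I_n -> btype m) r s st :
  (forall x, x \in s -> bids x = bids' x) ->
  foldl (mpu_step bids r) st s = foldl (mpu_step bids' r) st s.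
Proof.
elim: s st => [|y s IH] st H //=.
rewrite /mpu_step H ?mem_head //; apply: IH => x xs; apply: H; by rewrite in_cons xs orbT.
Qed.

Lemma allocE b eps m n (bids : 'I_n -> btype m) : mpu_alloc b eps bids =
  (foldl (mpu_step bids (Rpower (4 * INR b * INR m) (/ INR b)))
     ((fun _ => (mu_of eps bids / (4 * INR b * INR m))%R), fun _ => set0) (proc_order bids)).2.
Proof. by []. Qed.

Lemma top_max m n (bids : 'I_n -> btype m) j : top_bidder bids = Some j ->
  forall i, (vmax (bids i) <= vmax (bids j))%R.
Proof. move=> /first_max_mem [_ H] i; apply: H; by rewrite mem_enum. Qed.

Lemma top_exists m n (bids : 'I_n -> btype m) (i : 'I_n) : exists j, top_bidder bids = Some j.
Proof. apply: first_max_Some => E; have : i \in enum 'I_n by rewrite mem_enum. by rewrite E. Qed.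

Lemma proc_orderE m n (bids : 'I_n -> btype m) j : top_bidder bids = Some j ->
  proc_order bids = j :: [seq i <- enum 'I_n | i != j].
Proof. by rewrite /proc_order => ->. Qed.

Lemma proc_order_uniq m n (bids : 'I_n -> btype m) : uniq (proc_order bids).
Proof.
rewrite /proc_order; case: top_bidder => [j|] //=.
by rewrite mem_filter eqxx /= filter_uniq // enum_uniq.
Qed.

Lemma proc_order_mem m n (bids : 'I_n -> btype m) i : i \in proc_order bids.
Proof.
have [j E] := top_exists bids i; rewrite (proc_orderE E) in_cons mem_filter mem_enum.
by case: eqP.
Qed.

Lemma Rpower_ge1 x y : (1 <= x)%R -> (0 <= y)%R -> (1 <= Rpower x y)%R.
Proof.
move=> x1 y0; rewrite -(Rpower_O x); last lra.
by apply: Rle_Rpower.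
Qed.

Lemma INR_ge1 k : (0 < k)%N -> (1 <= INR k)%R.
Proof. move=> H; apply: (le_INR 1); by apply/leP. Qed.

Lemma top_gets b eps m n (bids : 'I_n -> btype m) j :
  (0 < m)%N -> (0 < b)%N -> (0 < eps < 1)%R -> top_bidder bids = Some j ->
  (vmax (bids j) <= vext (bids j) (mpu_alloc b eps bids j))%R.
Proof.
move=> m0 b0 he E.
rewrite allocE (proc_orderE E) /= run_notin; last by rewrite mem_filter eqxx.
rewrite /= eqxx /mu_of E.
have hb := INR_ge1 b0; have hm := INR_ge1 m0.
set v := vmax (bids j); have v0 : (0 <= v)%R by apply: vmax_ge0.
set p0 := (((1 + eps) * v) / (4 * INR b * INR m))%R.
have p00 : (0 <= p0)%R by rewrite /p0; apply: Rmult_le_pos; [nra| apply: Rlt_le; apply: Rinv_0_lt_compat; nra].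
have mp0 : (INR m * p0 <= v)%R.
  rewrite /p0 /Rdiv -Rmult_assoc (Rmult_comm (INR m)) Rmult_assoc Rinv_mult.
  have -> : (INR m * (/ (4 * INR b) * / INR m) = / (4 * INR b))%R by field; lra.
  apply: (Rmult_le_reg_r (4 * INR b)); first nra.
  rewrite Rmult_assoc Rinv_l; last lra. nra.
have [v_le0|[S [Sc vS]]] := vmax_attain (bids j).
  rewrite -/v in v_le0; have := vext_ge0 (bids j) (choose_set (bids j) (fun=> p0)); lra.
have Saff : (price_sum (fun _ => p0) S <= bval (bids j) S)%R.
  apply: Rle_trans (price_sum_const _ p00) _; rewrite -vS -/v; lra.
have [[_ H]|[Ac [_ Hmax]]] := choose_setP (bids j) (fun _ => p0).
  have := H _ Sc; lra.
apply: Rle_trans _ (vext_ge Ac (subxx _)).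
rewrite /v vS; exact: Hmax.
Qed.

Lemma choose_cmp m (d t : btype m) P : (forall e, 0 <= P e)%R ->
  (vext d (choose_set d P) <= vext t (choose_set d P))%R ->
  (vext t (choose_set d P) <= vext t (choose_set t P))%R.
Proof.
move=> P0 Hv; set A := choose_set d P in Hv *.
have hA : (price_sum P A <= vext d A)%R.
  have [[E _]|[Ac [Haff _]]] := choose_setP d P.
    rewrite /A E price_sum0; exact: vext_ge0.
  apply: Rle_trans Haff _; exact: vext_ge Ac (subxx _).
have [H0|[S [Sc [SA vS]]]] := vext_attain t A.
  have := vext_ge0 t (choose_set t P); lra.
have Saff : (price_sum P S <= bval t S)%R.
  apply: Rle_trans (price_sum_mono P0 (fun e => Rle_refl _) SA) _; lra.
have [[_ H]|[Bc [_ Hmax]]] := choose_setP t P.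
  have := H _ Sc; lra.
rewrite vS; apply: Rle_trans (Hmax _ Sc Saff) _; exact: vext_ge Bc (subxx _).
Qed.

Lemma index_neq (T : eqType) (l : seq T) x y : x \in l -> y \in l -> x != y -> index x l != index y l.
Proof.
move=> xl yl; apply: contraNN => /eqP E.
by rewrite -(nth_index x xl) E nth_index.
Qed.

Lemma truthful (m n b k : nat) (eps : R) (bids : 'I_n -> btype m) (i : 'I_n)
          (t d : btype m) :
     (0 < m)%N -> (0 < b)%N -> (0 < eps < 1)%R ->
     (forall i', wf_type k (bids i')) -> wf_type k t -> wf_type k d ->
     (vext d (mpu_alloc b eps (upd bids i d) i)
        <= vext t (mpu_alloc b eps (upd bids i d) i))%R ->
     (vext t (mpu_alloc b eps (upd bids i d) i)
        <= vext t (mpu_alloc b eps (upd bids i t) i))%R.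
Proof.
move=> m0 b0 he _ _ _ Hver.
set bd := upd bids i d; set bt := upd bids i t.
have bdi : bd i = d by rewrite /bd /upd eqxx.
have bti : bt i = t by rewrite /bt /upd eqxx.
have bdbt : forall x, x != i -> bd x = bt x by move=> x xi; rewrite /bd /bt /upd (negbTE xi).
have [jd Ed] := top_exists bd i.
have [jt Et] := top_exists bt i.
have U := enum_uniq 'I_n.
have memE : forall x : 'I_n, x \in enum 'I_n by move=> x; rewrite mem_enum.
case: (eqVneq jt i) => [jti|jti].
  have := top_gets m0 b0 he Et; rewrite jti bti => H.
  apply: Rle_trans H; exact: vext_le_vmax.
case: (eqVneq jd i) => [jdi|jdi].
  exfalso.
  have := top_gets m0 b0 he Ed; rewrite jdi bdi => Hd.
  have Hle : (vmax d <= vmax t)%R.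
    apply: Rle_trans Hd _; apply: Rle_trans Hver _; exact: vext_le_vmax.
  have fjt : vmax (bd jt) = vmax (bt jt) by rewrite bdbt.
  have [_ Hf] := first_max_mem Ed; have [_ Hg] := first_max_mem Et.
  have Ifd := first_max_idx U Ed; have Igt := first_max_idx U Et.
  rewrite jdi in Hf Ifd.
  have := index_neq (memE i) (memE jt) (negbT (introF eqP (fun h => (negP jti) (introT eqP (esym h))))).
  rewrite neq_ltn => /orP [lt|lt].
    have := Igt _ (memE i) lt; have := Hf _ (memE jt); rewrite bdi bti in Hle *. rewrite fjt; lra.
  have := Ifd _ (memE jt) lt; have := Hg _ (memE i); rewrite bdi bti in Hle *. rewrite fjt; lra.
have ejd : jd = jt.
  apply/eqP; apply: contraT => ne.
  have [_ Hf] := first_max_mem Ed; have [_ Hg] := first_max_mem Et.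
  have Ifd := first_max_idx U Ed; have Igt := first_max_idx U Et.
  have := index_neq (memE jd) (memE jt) ne; rewrite neq_ltn => /orP [lt|lt].
    have := Igt _ (memE jd) lt; have := Hf _ (memE jt); rewrite !bdbt //; lra.
  have := Ifd _ (memE jt) lt; have := Hg _ (memE jd); rewrite !bdbt //; lra.
subst jd.
have Po : proc_order bd = proc_order bt by rewrite /proc_order Ed Et.
have Mu : mu_of eps bd = mu_of eps bt by rewrite /mu_of Ed Et bdbt.
have [s1 [s2 Eo]] : exists s1 s2, proc_order bt = s1 ++ i :: s2.
  by case/splitPr: (proc_order_mem bt i) => s1 s2; exists s1, s2.
have Uo := proc_order_uniq bt; rewrite Eo in Uo.
have ag : foldl (mpu_step bd (Rpower (4 * INR b * INR m) (/ INR b)))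
   ((fun _ => (mu_of eps bt / (4 * INR b * INR m))%R), fun _ => set0) s1 =
   foldl (mpu_step bt (Rpower (4 * INR b * INR m) (/ INR b)))
   ((fun _ => (mu_of eps bt / (4 * INR b * INR m))%R), fun _ => set0) s1.
  apply: run_agree => x xs; apply: bdbt; apply: contraTneq xs => ->.
  by move: Uo; rewrite cat_uniq => /and3P [_ /hasPn H _]; apply: H; rewrite mem_head.
have cd : choose_set (bd i) = choose_set d by rewrite bdi.
have ct : choose_set (bt i) = choose_set t by rewrite bti.
move: Hver; rewrite !allocE Po Mu Eo !run_split // ag cd ct.
apply: choose_cmp.
apply: run_nonneg.
  rewrite /Rpower; apply: Rlt_le; apply: exp_pos.
move=> e /=; rewrite /mu_of Et.
have hb := INR_ge1 b0; have hm := INR_ge1 m0; have := vmax_ge0 (bt jt).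
move=> v0; apply: Rmult_le_pos; [nra| apply: Rlt_le; apply: Rinv_0_lt_compat; nra].
Qed.

Lemma price_sum_elem m (p : 'I_m -> R) (S : {set 'I_m}) e : (forall e, 0 <= p e)%R ->
  e \in S -> (p e <= price_sum p S)%R.
Proof.
move=> H eS; rewrite price_sumE (bigD1 e) //= eS.
rewrite -{1}(Rplus_0_r (p e)); apply: Rplus_le_compat_l.
apply: big_Rge0 => i _; case: ifP => _ //; lra.
Qed.

Section Feas.
Variables (m n b : nat) (bids : 'I_n -> btype m) (r p0 mu V : R).
Hypothesis r1 : (1 <= r)%R.
Hypothesis p00 : (0 <= p0)%R.
Hypothesis rb : (p0 * r ^ b = mu)%R.
Hypothesis Vmu : (V < mu)%R.
Hypothesis Vmax : forall x, (vmax (bids x) <= V)%R.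

Definition cnt (st : ('I_m -> R) * ('I_n -> {set 'I_m})) e := #|[set y | e \in st.2 y]|.
Definition Inv (st : ('I_m -> R) * ('I_n -> {set 'I_m})) :=
  forall e, st.1 e = (p0 * r ^ cnt st e)%R /\ (cnt st e <= b)%N.

Lemma step_inv st x : Inv st -> st.2 x = set0 -> Inv (mpu_step bids r st x).
Proof.
move=> I sx e.
have nn : forall e, (0 <= st.1 e)%R.
  move=> e'; rewrite (proj1 (I e')); apply: Rmult_le_pos => //; apply: pow_le; lra.
set S := choose_set (bids x) st.1.
have Eset : [set y | e \in (mpu_step bids r st x).2 y] =
    if e \in S then x |: [set y | e \in st.2 y] else [set y | e \in st.2 y].
  apply/setP => y; rewrite /= !inE.
  case: (eqVneq y x) => [->|yx]; case: ifP => eS; rewrite ?inE ?eqxx ?sx ?in_set0 ?eS //.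
  by rewrite (negbTE yx).
have [I1 I2] := I e.
rewrite /cnt Eset /=; rewrite -/S.
case: ifP => eS; last by split.
have xn : x \notin [set y | e \in st.2 y] by rewrite inE sx in_set0.
rewrite cardsU1 xn /=; split.
  rewrite I1 /cnt add0n Rmult_assoc; congr (Rmult p0 _); apply: Rmult_comm.
rewrite add1n ltnNge; apply/negP => cb.
have [[S0 _]|[Sc [Saff _]]] := choose_setP (bids x) st.1.
  by move: eS; rewrite /S S0 in_set0.
have h1 := price_sum_elem nn eS.
have h2 := vmax_ge Sc; have h3 := Vmax x.
have h4 : (mu <= st.1 e)%R.
  rewrite I1 -rb; apply: Rmult_le_compat_l => //; apply: Rle_pow => //; exact/leP.
rewrite -/S in Saff h2; lra.
Qed.

Lemma run_inv s st : uniq s -> (forall y, y \in s -> st.2 y = set0) -> Inv st ->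
  Inv (foldl (mpu_step bids r) st s).
Proof.
elim: s st => [|x s IH] st //= /andP [xs U] H I.
apply: IH => //; last by apply: step_inv => //; apply: H; rewrite mem_head.
move=> y ys /=; have -> : (y == x) = false by apply/eqP => E; move: xs; rewrite -E ys.
apply: H; by rewrite in_cons ys orbT.
Qed.
End Feas.

Lemma Rpower_b x b : (0 < x)%R -> (0 < b)%N -> (Rpower x (/ INR b) ^ b = x)%R.
Proof.
move=> x0 b0; have hb := INR_ge1 b0.
rewrite -Rpower_pow; last by rewrite /Rpower; apply: exp_pos.
rewrite Rpower_mult Rinv_l; last lra.
by rewrite Rpower_1.
Qed.

Lemma feasibility (m n b k : nat) (eps : R) (bids : 'I_n -> btype m) :
     (0 < m)%N -> (0 < b)%N -> (0 < eps < 1)%R ->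
     (forall i, wf_type k (bids i)) ->
     (exists (i : 'I_n) (S : {set 'I_m}), S \in bcoll (bids i) /\ (0 < bval (bids i) S)%R) ->
     feasible b (mpu_alloc b eps bids).
Proof.
move=> m0 b0 he _ [i [S [Sc Spos]]].
have [j E] := top_exists bids i.
have hb := INR_ge1 b0; have hm := INR_ge1 m0.
set V := vmax (bids j).
have Vpos : (0 < V)%R by apply: Rlt_le_trans Spos _; apply: Rle_trans (vmax_ge Sc) _; exact: top_max E i.
have Vm := top_max E.
set mu := ((1 + eps) * V)%R.
set p0 := (mu / (4 * INR b * INR m))%R.
set r := Rpower (4 * INR b * INR m) (/ INR b).
have r1 : (1 <= r)%R by apply: Rpower_ge1; [nra| apply: Rlt_le; apply: Rinv_0_lt_compat; lra].
have p00 : (0 <= p0)%R by rewrite /p0 /mu; apply: Rmult_le_pos; [nra| apply: Rlt_le; apply: Rinv_0_lt_compat; nra].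
have rb : (p0 * r ^ b = mu)%R by rewrite /r Rpower_b; [rewrite /p0; field; lra| nra| done].
have Vmu : (V < mu)%R by rewrite /mu; nra.
have I := @run_inv m n b bids r p0 mu V r1 p00 rb Vmu Vm (proc_order bids)
   ((fun _ => p0), fun _ => set0) (proc_order_uniq bids) (fun _ _ => erefl).
have I0 : Inv b r p0 ((fun _ => p0), (fun _ : 'I_n => (set0 : {set 'I_m}))).
  move=> e; rewrite /cnt /=.
  have -> : [set y : 'I_n | e \in set0] = set0 by apply/setP => y; rewrite !inE.
  by rewrite cards0 /=; split; [ring|].
move=> e; have := (I I0 e).2.
by rewrite allocE /mu_of E -/V -/mu -/p0 -/r.
Qed.

Lemma choose_price m (d : btype m) P : (forall e, 0 <= P e)%R ->
  (price_sum P (choose_set d P) <= vext d (choose_set d P))%R.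
Proof.
move=> P0; have [[E _]|[Ac [Haff _]]] := choose_setP d P.
  rewrite E price_sum0; exact: vext_ge0.
apply: Rle_trans Haff _; exact: vext_ge Ac (subxx _).
Qed.

Section Approx.
Variables (m n : nat) (t : 'I_n -> btype m) (r : R).
Hypothesis r1 : (1 <= r)%R.

Definition tot (P : 'I_m -> R) := \big[Rplus/0%R]_(e < m) P e.

Lemma step_sum st x : tot (mpu_step t r st x).1 =
  (tot st.1 + (r - 1) * price_sum st.1 (choose_set (t x) st.1))%R.
Proof.
rewrite /tot price_sumE -big_Rdistr -big_split /=; apply: eq_bigr => e _.
case: ifP => _; ring.
Qed.

Lemma run_sum s st : uniq s -> (forall e, 0 <= st.1 e)%R ->
  (tot (foldl (mpu_step t r) st s).1 <= tot st.1 +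
     (r - 1) * \big[Rplus/0%R]_(x <- s) vext (t x) ((foldl (mpu_step t r) st s).2 x))%R.
Proof.
elim: s st => [|x s IH] st /=.
  move=> _ _; rewrite big_nil; lra.
move=> /andP [xs U] nn.
have nn' : forall e, (0 <= (mpu_step t r st x).1 e)%R.
  move=> e; rewrite /mpu_step /=; case: ifP => _; have := nn e; nra.
apply: Rle_trans (IH _ U nn') _.
rewrite step_sum big_cons run_notin //= eqxx.
have h := choose_price (t x) nn.
have h2 := Rmult_le_compat_l (r - 1) _ _ (ltac:(lra) : (0 <= r - 1)%R) h.
rewrite Rmult_plus_distr_l; lra.
Qed.

Lemma run_opt s st : uniq s -> (forall e, 0 <= st.1 e)%R ->
  forall x, x \in s -> forall S, S \in bcoll (t x) ->
  (bval (t x) S <= vext (t x) ((foldl (mpu_step t r) st s).2 x) +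
                   price_sum (foldl (mpu_step t r) st s).1 S)%R.
Proof.
elim: s st => [|y s IH] st //= /andP [ys U] nn x.
have nn' : forall e, (0 <= (mpu_step t r st y).1 e)%R.
  move=> e; rewrite /mpu_step /=; case: ifP => _; have := nn e; nra.
rewrite in_cons => /orP [/eqP ->|xs]; last exact: IH.
move=> S Sc.
rewrite run_notin //= eqxx.
set F := foldl _ _ _.
have mono : (price_sum st.1 S <= price_sum F.1 S)%R.
  apply: (price_sum_mono nn _ (subxx S)) => e.
  have := run_mono t (y :: s) r1 nn e; done.
have hF : (0 <= price_sum F.1 S)%R by apply: price_sum_ge0; apply: run_nonneg => //; lra.
have h0 := vext_ge0 (t y) (choose_set (t y) st.1).
case: (Rle_dec (price_sum st.1 S) (bval (t y) S)) => Haff; last lra.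
have [[_ H]|[Ac [_ Hmax]]] := choose_setP (t y) st.1.
  have := H _ Sc; lra.
have := Hmax _ Sc Haff; have := vext_ge Ac (subxx _); lra.
Qed.
End Approx.

Lemma pow4 b : (INR b.+1 <= 4 ^ b)%R.
Proof.
elim: b => [|b IH]; first by rewrite /=; lra.
rewrite S_INR; have := pow_R1_Rle 4 b; simpl in IH |- *; lra.
Qed.

Lemma r_bound b m : (0 < b)%N -> (0 < m)%N ->
  (Rpower (4 * INR b * INR m) (/ INR b) <= 4 * Rpower (INR m) (/ INR b))%R.
Proof.
move=> b0 m0; have hb := INR_ge1 b0; have hm := INR_ge1 m0.
rewrite -Rpower_mult_distr; [|nra|lra].
apply: Rmult_le_compat_r; first by rewrite /Rpower; apply: Rlt_le; apply: exp_pos.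
have h4 : (4 * INR b <= 4 ^ b)%R.
  case: b b0 hb => [|b] // _ hb; rewrite -tech_pow_Rmult; have := pow4 b; lra.
apply: Rle_trans (Rle_Rpower_l _ _ _ _ (conj _ h4)) _.
- apply: Rlt_le; apply: Rinv_0_lt_compat; lra.
- lra.
rewrite -Rpower_pow; last lra.
rewrite Rpower_mult Rinv_r; last lra.
rewrite Rpower_1; lra.
Qed.

Lemma count_sum m n (X : 'I_n -> {set 'I_m}) e c :
  \big[Rplus/0%R]_(x <- enum 'I_n) (if e \in X x then c else 0%R) =
  (INR #|[set y | e \in X y]| * c)%R.
Proof.
rewrite -big_mkcond big_enum_cond -iter_Rplus -big_const; apply: eq_bigl => x.
by rewrite inE.
Qed.

Lemma welfareE m n (t : 'I_n -> btype m) X :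
  welfare t X = \big[Rplus/0%R]_(x <- enum 'I_n) vext (t x) (X x).
Proof. by rewrite /welfare foldr_big. Qed.

Lemma approx (m n b k : nat) (eps : R) (t : 'I_n -> btype m) :
       (0 < m)%N -> (0 < b)%N -> (0 < eps < 1)%R ->
       (forall i, wf_type k (t i)) ->
       forall X : 'I_n -> {set 'I_m}, feasible b X ->
       (welfare t X <= 6 * INR b * Rpower (INR m) (/ INR b)
                        * welfare t (mpu_alloc b eps t))%R.
Proof.
move=> m0 b0 he _ X feasX.
have hb := INR_ge1 b0; have hm := INR_ge1 m0.
set M := Rpower (INR m) (/ INR b).
have M1 : (1 <= M)%R by apply: Rpower_ge1 => //; apply: Rlt_le; apply: Rinv_0_lt_compat; lra.
case: n t X feasX => [|n] t X feasX.
  have e0 : enum 'I_0 = [::] by apply: size0nil; rewrite size_enum_ord.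
  rewrite !welfareE e0 !big_nil; lra.
have [j E] := top_exists t ord0.
set V := vmax (t j).
have V0 : (0 <= V)%R by apply: vmax_ge0.
set mu := ((1 + eps) * V)%R.
set p0 := (mu / (4 * INR b * INR m))%R.
set r := Rpower (4 * INR b * INR m) (/ INR b).
have r1 : (1 <= r)%R by apply: Rpower_ge1; [nra| apply: Rlt_le; apply: Rinv_0_lt_compat; lra].
have rM : (r <= 4 * M)%R by apply: r_bound.
have p00 : (0 <= p0)%R by rewrite /p0 /mu; apply: Rmult_le_pos; [nra| apply: Rlt_le; apply: Rinv_0_lt_compat; nra].
have mp0 : (INR m * p0 <= V / 2)%R.
  rewrite /p0 /mu /Rdiv.
  have -> : (INR m * ((1 + eps) * V * / (4 * INR b * INR m)) = (1 + eps) * V * / (4 * INR b))%R.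
    field; lra.
  apply: (Rmult_le_reg_r (4 * INR b)); first nra.
  rewrite Rmult_assoc Rinv_l; last lra. nra.
set o := proc_order t.
set st0 := ((fun _ : 'I_m => p0), fun _ : 'I_n.+1 => (set0 : {set 'I_m})).
set F := foldl (mpu_step t r) st0 o.
have AE : mpu_alloc b eps t = F.2 by rewrite allocE /mu_of E.
have Uo : uniq o := proc_order_uniq t.
have Po : perm_eq o (enum 'I_n.+1).
  apply: uniq_perm => //; first exact: enum_uniq.
  by move=> x; rewrite mem_enum proc_order_mem.
have nn0 : forall e, (0 <= st0.1 e)%R by [].
have nnF : forall e, (0 <= F.1 e)%R by apply: run_nonneg => //; lra.
set W := welfare t F.2.
have WE : W = \big[Rplus/0%R]_(x <- o) vext (t x) (F.2 x) by rewrite /W welfareE (perm_big _ Po).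
have W0 : (0 <= W)%R by rewrite /W welfareE; apply: big_Rge0 => x _; exact: vext_ge0.
have WV : (V <= W)%R.
  apply: Rle_trans (top_gets m0 b0 he E) _; rewrite AE /W welfareE.
  rewrite (bigD1_seq j) ?mem_enum ?enum_uniq //=.
  rewrite -{1}(Rplus_0_r (vext _ _)); apply: Rplus_le_compat_l.
  apply: big_Rge0 => x _; exact: vext_ge0.
have hsum : (tot F.1 <= INR m * p0 + (r - 1) * W)%R.
  rewrite WE; apply: Rle_trans (run_sum t r1 Uo nn0) _.
  rewrite /tot /= big_Rconst; apply: Rle_refl.
have hopt : (welfare t X <= W + \big[Rplus/0%R]_(x <- enum 'I_n.+1) price_sum F.1 (X x))%R.
  rewrite /W !welfareE -big_split; apply: big_Rle => x _ /=.
  have h0 := vext_ge0 (t x) (F.2 x); have h1 := price_sum_ge0 (X x) nnF.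
  have [H|[S [Sc [SX ->]]]] := vext_attain (t x) (X x); first lra.
  apply: Rle_trans (@run_opt _ _ t r r1 o st0 Uo nn0 x (proc_order_mem t x) S Sc) _.
  have := price_sum_mono nnF (fun e => Rle_refl _) SX; rewrite -/F; lra.
have hcount : (\big[Rplus/0%R]_(x <- enum 'I_n.+1) price_sum F.1 (X x) <= INR b * tot F.1)%R.
  under eq_bigr do rewrite price_sumE.
  rewrite exchange_big /tot -big_Rdistr; apply: big_Rle => e _.
  rewrite count_sum; apply: Rmult_le_compat_r => //; apply: le_INR; apply/leP; exact: feasX.
rewrite AE -/W.
have h1 := Rmult_le_compat_l (INR b) _ _ (ltac:(lra) : (0 <= INR b)%R) hsum.
have bW : (0 <= INR b * W)%R by nra.
have h2 : (INR b * (r - 1) * W <= INR b * (4 * M - 1) * W)%R.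
  apply: Rmult_le_compat_r => //; apply: Rmult_le_compat_l; lra.
have h3 : (INR b * W <= INR b * M * W)%R.
  rewrite (Rmult_comm (INR b) M) Rmult_assoc; nra.
have h4 : (W <= INR b * W)%R by nra.
nra.
Qed.

Theorem theorem5 :
  (* feasibility: each good allocated at most b times *)
  (forall (m n b k : nat) (eps : R) (bids : 'I_n -> btype m),
     (0 < m)%N -> (0 < b)%N -> (0 < eps < 1)%R ->
     (forall i, wf_type k (bids i)) ->
     (exists (i : 'I_n) (S : {set 'I_m}), S \in bcoll (bids i) /\ (0 < bval (bids i) S)%R) ->
     feasible b (mpu_alloc b eps bids))
  /\
  (* truthfulness without money, with verification *)
  (forall (m n b k : nat) (eps : R) (bids : 'I_n -> btype m) (i : 'I_n)
          (t d : btype m),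
     (0 < m)%N -> (0 < b)%N -> (0 < eps < 1)%R ->
     (forall i', wf_type k (bids i')) -> wf_type k t -> wf_type k d ->
     (vext d (mpu_alloc b eps (upd bids i d) i)
        <= vext t (mpu_alloc b eps (upd bids i d) i))%R ->
     (vext t (mpu_alloc b eps (upd bids i d) i)
        <= vext t (mpu_alloc b eps (upd bids i t) i))%R)
  /\
  (* approximation ratio O(b m^(1/b)) on truthful inputs *)
  (exists C : R, (0 < C)%R /\
     forall (m n b k : nat) (eps : R) (t : 'I_n -> btype m),
       (0 < m)%N -> (0 < b)%N -> (0 < eps < 1)%R ->
       (forall i, wf_type k (t i)) ->
       forall X : 'I_n -> {set 'I_m}, feasible b X ->
       (welfare t X <= C * INR b * Rpower (INR m) (/ INR b)
                        * welfare t (mpu_alloc b eps t))%R).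
Proof.
split; first exact: feasibility.
split; first exact: truthful.
exists 6%R; split; first lra.
exact: approx.
Qed.
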